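(* Let $W=\langle s,t: s^2=t^2=(st)^m=1\rangle$ with $S=\{s,t\}$ and $m=2k$, $k>0$, the order of $st$. Let $W^+=\langle st\rangle$ and, for a fixed primitive $m$-th root of unity $\zeta_m$, let $\chi_j$ be the linear character of $W^+$ with $\chi_j(st)=\zeta_m^j$. Put $\varphi_{(st)^j}=\chi_{2j}$ for $0<j<k$ and $\varphi_{(st)^k}=\epsilon_S$. Then $\varphi_{(st)^j}$ is a linear character of $C_W((st)^j)$ for $j=1,\dots,k$, and $\sum_{j=1}^k\operatorname{Ind}_{C_W((st)^j)}^W\varphi_{(st)^j}=\epsilon_S+\sum_{j=1}^{k-1}\operatorname{Ind}_{W^+}^W\chi_{2j}=\Phi_S$.
   Context: $\epsilon_S$ is the sign character of $W$. $\Phi_S$ is the character of $W$ acting by right multiplication on $e_S\mathbb CW$, where: for $J\subseteq S$, $X_J=\{w:\ell(rw)>\ell(w)\ \forall r\in J\}$, $x_J=\sum_{x\in X_J}x^{-1}$, $X_J^\sharp=\{x\in X_J:x^{-1}Jx\subseteq S\}$, $m_{KL}=|X_K\cap X_L^\sharp|$ if $L\subseteq K$ and $0$ otherwise, and $e_L$ is defined by $x_K=\sum_Lm_{KL}e_L$. (Equivalently, $\Phi_S=\operatorname{Ind}_{\langle w_0\rangle}^W(1)-1_S$ with $w_0$ the longest element.) *)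

(* Defs.v *)
From HB Require Import structures.
From mathcomp Require Import all_boot all_order all_algebra all_fingroup all_solvable all_field all_character.
Set Implicit Arguments. Unset Strict Implicit. Unset Printing Implicit Defensive.
Import Order.TTheory GRing.Theory Num.Theory.
Local Open Scope ring_scope.

(* Coxeter length w.r.t. a generating set S of involutions:
   the least n such that w is a product of n elements of S
   (words of length < #|gT| suffice for elements of <<S>>). *)
Definition word_of_len (gT : finGroupType) (S : {set gT}) (w : gT) (n : nat) :=
  [exists ws : n.-tuple gT, all (fun x => x \in S) ws && ((\prod_(x <- ws) x)%g == w)].

Definition cox_len (gT : finGroupType) (S : {set gT}) (w : gT) : nat :=
  (\big[minn/#|gT|]_(n < #|gT| | word_of_len S w n) n)%N.

Definition is_longest (gT : finGroupType) (S : {set gT}) (w : gT) : bool :=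
  (w \in <<S>>%g) && [forall v in <<S>>%g, (cox_len S v <= cox_len S w)%N].

Definition Phi_S (gT : finGroupType) (S : {set gT}) (w0 : gT) : 'CF(<<S>>%g) :=
  'Ind[<<S>>%g] (1 : 'CF(<[w0]>)) - 1.

Definition phi_st (gT : finGroupType) (s t : gT) (k : nat)
  (eps : 'CF(<<[set s; t]>>)) (chi : nat -> 'CF(<[(s * t)%g]>)) (j : nat)
  : 'CF('C_(<<[set s; t]>>)[((s * t) ^+ j)%g]) :=
  if (j < k)%N then 'Res (chi (2 * j)%N) else 'Res eps.
Arguments Phi_S {gT} S w0.

(* Main.v *)
Require Import Defs.
From HB Require Import structures.
From mathcomp Require Import all_boot all_order all_algebra all_fingroup all_solvable all_field all_character.
From mathcomp Require Import zify ring.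
Import Order.TTheory GRing.Theory Num.Theory.
Local Open Scope group_scope.

Lemma word_of_lenP (gT : finGroupType) (S : {set gT}) w n :
  reflect (exists ws : seq gT, [/\ size ws = n, all (fun x => x \in S) ws & \prod_(x <- ws) x = w])
    (word_of_len S w n).
Proof.
apply: (iffP existsP) => [[ws /andP [h1 /eqP h2]] | [ws [hs h1 h2]]].
  by exists ws; rewrite size_tuple.
by subst n; exists (in_tuple ws); rewrite h1 h2 eqxx.
Qed.

Lemma bigmin_le (I : eqType) (r : seq I) (P : pred I) (F : I -> nat) j idx :
  j \in r -> P j -> (\big[minn/idx]_(i <- r | P i) F i <= F j)%N.
Proof.
elim: r => [|x r IH] //; rewrite inE big_cons => /orP [/eqP <- -> | jr Pj].
  exact: geq_minl.
case: ifP => _; last exact: IH.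
by rewrite geq_min IH ?orbT.
Qed.

Lemma cox_len_le (gT : finGroupType) (S : {set gT}) w n :
  (n < #|gT|)%N -> word_of_len S w n -> (cox_len S w <= n)%N.
Proof.
move=> hn hw; rewrite /cox_len.
exact: (@bigmin_le _ _ (fun i : 'I_#|gT| => word_of_len S w i) (fun i => nat_of_ord i) (Ordinal hn) #|gT| (mem_index_enum _) hw).
Qed.

Lemma cox_len_ge (gT : finGroupType) (S : {set gT}) w m :
  (m <= #|gT|)%N -> (forall n, word_of_len S w n -> m <= n)%N -> (m <= cox_len S w)%N.
Proof.
move=> hm hw; rewrite /cox_len; apply: (big_ind (fun x => m <= x)%N) => //.
  by move=> x y hx hy; rewrite leq_min hx hy.
by move=> i /hw.
Qed.
Local Open Scope ring_scope.
Lemma cfInd_sameset (gT : finGroupType) (G H K : {group gT}) (phi : 'CF(H)) (psi : 'CF(K)) :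
  H :=: K -> H \subset G -> (forall x, phi x = psi x) -> 'Ind[G] phi = 'Ind[G] psi.
Proof.
move=> HK HG e; apply/cfunP => x.
rewrite !cfIndE -?HK //; congr (_ * _)%R; first by rewrite HK.
by apply: eq_bigr => y _; rewrite e.
Qed.

Lemma cfRes_sameset (gT : finGroupType) (H K : {group gT}) (phi : 'CF(K)) x :
  H :=: K -> ('Res[H] phi) x = phi x.
Proof.
move=> HK; case: (boolP (x \in H)) => hx; first by rewrite cfResE // HK.
by rewrite !cfun0 // -HK.
Qed.

Lemma geom1 (u : algC) (k : nat) : (0 < k)%N -> (u ^+ k = 1 ->
  \sum_(1 <= j < k) u ^+ j = (if u == 1 then k%:R else 0) - 1)%R.
Proof.
move=> k0 uk.
have e : (\sum_(j < k) u ^+ j = 1 + \sum_(1 <= j < k) u ^+ j)%R.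
  by rewrite -(big_mkord xpredT) big_ltn // expr0.
have -> : (\sum_(1 <= j < k) u ^+ j = \sum_(j < k) u ^+ j - 1)%R by rewrite e (addrC 1) addrK.
case: eqP => [-> | /eqP ne].
  by rewrite (eq_bigr (fun _ => 1%R)) ?sumr_const ?card_ord // => i _; rewrite expr1n.
have : ((u - 1) * \sum_(j < k) u ^+ j = 0)%R by rewrite -subrX1 uk subrr.
by move/eqP; rewrite mulf_eq0 subr_eq0 (negbTE ne) /= => /eqP ->.
Qed.
Local Close Scope ring_scope.

Section Dih.
Variables (gT : finGroupType) (s t : gT) (k : nat).
Hypotheses (k_gt0 : (0 < k)%N) (os : #[s] = 2%N) (ot : #[t] = 2%N) (ort : #[s * t] = (2 * k)%N).
Local Notation r := (s * t).
Local Notation q := ((s * t)^-1).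

Lemma invol (x : gT) : #[x] = 2%N -> x * x = 1.
Proof. by move=> ox; have := expg_order x; rewrite ox expgS expg1. Qed.
Lemma involV (x : gT) : #[x] = 2%N -> x^-1 = x.
Proof. by move=> ox; rewrite -[x^-1]mulg1 -(invol x ox) mulKg. Qed.
Lemma ss : s * s = 1. Proof. exact: invol. Qed.
Lemma tt1 : t * t = 1. Proof. exact: invol. Qed.
Lemma sV : s^-1 = s. Proof. exact: involV. Qed.
Lemma tV : t^-1 = t. Proof. exact: involV. Qed.
Lemma qE : q = t * s. Proof. by rewrite invMg sV tV. Qed.
Lemma tr : t = s * r. Proof. by rewrite mulgA ss mul1g. Qed.
Lemma tq : t = q * s. Proof. by rewrite qE -mulgA ss mulg1. Qed.
Lemma rt : r * t = s. Proof. by rewrite -mulgA tt1 mulg1. Qed.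
Lemma sC g : s * g = g ^ s * s. Proof. by rewrite conjgCV sV. Qed.
Lemma tC g : t * g = g ^ t * t. Proof. by rewrite conjgCV tV. Qed.
Lemma rs : r ^ s = q. Proof. by rewrite conjgE sV qE !mulgA ss mul1g. Qed.
Lemma rtc : r ^ t = q. Proof. by rewrite conjgE tV qE -!mulgA tt1 mulg1. Qed.
Lemma rAs a : (r ^+ a) ^ s = q ^+ a. Proof. by rewrite conjXg rs. Qed.
Lemma rAt a : (r ^+ a) ^ t = q ^+ a. Proof. by rewrite conjXg rtc. Qed.
Lemma qAs a : (q ^+ a) ^ s = r ^+ a. Proof. by rewrite conjXg conjVg rs invgK. Qed.
Lemma qAt a : (q ^+ a) ^ t = r ^+ a. Proof. by rewrite conjXg conjVg rtc invgK. Qed.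
Local Notation W := <<[set s; t]>>.
Lemma sW : s \in W. Proof. by rewrite mem_gen // set21. Qed.
Lemma tW : t \in W. Proof. by rewrite mem_gen // set22. Qed.
Lemma rW : r \in W. Proof. by rewrite groupM ?sW ?tW. Qed.
Lemma r2k : r ^+ (2 * k) = 1. Proof. by rewrite -ort expg_order. Qed.

Lemma s_notin : s \notin <[r]>.
Proof.
apply/negP => /cycleP [i si].
have cm : commute r s by rewrite [X in commute _ X]si; apply: commuteX.
have rr : r ^ s = r by rewrite conjgE cm mulKg.
have r21 : r ^+ 2 = 1 by rewrite expgS expg1 -{2}rr rs mulgV.
have : (2 * k %| 2)%N by rewrite -ort order_dvdn r21.
move/dvdn_leq => /= /(_ isT) k1.
have ek : k = 1%N by apply/eqP; rewrite eqn_leq k_gt0 andbT; rewrite -(leq_pmul2l (isT : 0 < 2)%N) muln1.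
have or2 : #[r] = 2%N by rewrite ort ek.
have : s \in <[r]> by rewrite [X in X \in _]si mem_cycle.
rewrite cycle2g // !inE => /orP [/eqP s1 | /eqP e].
  by move: os; rewrite s1 order1.
have t1 : t = 1 by apply: (mulgI s); rewrite mulg1 -e.
by move: ot; rewrite t1 order1.
Qed.

Lemma RS : <[r]> :&: <[s]> = 1.
Proof.
apply/eqP; rewrite eqEsubset sub1G andbT; apply/subsetP => x /setIP [xr].
rewrite cycle2g // !inE => /orP [-> //| /eqP xs].
by move: xr; rewrite xs (negbTE s_notin).
Qed.

Lemma snorm : <[s]> \subset 'N(<[r]>).
Proof. by rewrite cycle_subG; apply/normP; rewrite -cycleJ rs cycleV. Qed.

Lemma WE : W = <[r]> * <[s]>.
Proof.
rewrite -norm_joinEr ?snorm //; apply/eqP; rewrite eqEsubset; apply/andP; split.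
  have hs : s \in <[r]> <*> <[s]> by rewrite (subsetP (joing_subr _ _)) ?cycle_id.
  have hr : r \in <[r]> <*> <[s]> by rewrite (subsetP (joing_subl _ _)) ?cycle_id.
  rewrite gen_subG; apply/subsetP => x; rewrite !inE => /orP [] /eqP -> //.
  by rewrite -[X in X \in _](mulKg s) groupM ?groupV.
by rewrite join_subG !cycle_subG rW sW.
Qed.

Lemma sdpW : <[r]> ><| <[s]> = W.
Proof. by rewrite sdprodE ?snorm ?RS // WE. Qed.

Lemma cardW : #|W| = (2 * k * 2)%N.
Proof. by rewrite WE TI_cardMg ?RS // -!orderE ort os. Qed.

Lemma W_elem g : g \in W -> exists2 a, (a < 2 * k)%N & (g = r ^+ a \/ g = r ^+ a * s).
Proof.
rewrite WE => /mulsgP [x y /cycleP [i ->] ys ->].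
exists (i %% #[r])%N; first by rewrite -ort ltn_pmod // ort muln_gt0 k_gt0.
move: ys; rewrite cycle2g // !inE expg_mod_order => /orP [] /eqP ->; last by right.
by left; rewrite mulg1.
Qed.
Definition fam (n : nat) (g : gT) := exists a, [\/ g = r ^+ a /\ (2 * a <= n)%N,
  g = q ^+ a /\ (2 * a <= n)%N, g = r ^+ a * s /\ (2 * a + 1 <= n)%N
  | g = q ^+ a * t /\ (2 * a + 1 <= n)%N].

Lemma fam_step n g x : x \in [set s; t] -> fam n g -> fam n.+1 (x * g).
Proof.
rewrite !inE => /orP [] /eqP -> [a [[-> h]|[-> h]|[-> h]|[-> h]]].
- rewrite (sC (r ^+ a)) rAs; case: a h => [|b] h.
    by exists 0%N; apply: Or43; rewrite !expg0; split=> //; lia.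
  by exists b; apply: Or44; rewrite expgSr -mulgA -tq; split=> //; lia.
- by exists a; apply: Or43; rewrite (sC (q ^+ a)) qAs; split=> //; lia.
- by exists a; apply: Or42; rewrite mulgA (sC (r ^+ a)) rAs -mulgA ss mulg1; split=> //; lia.
- by exists a.+1; apply: Or41; rewrite mulgA (sC (q ^+ a)) qAs -mulgA expgSr; split=> //; lia.
- by exists a; apply: Or44; rewrite (tC (r ^+ a)) rAt; split=> //; lia.
- rewrite (tC (q ^+ a)) qAt; case: a h => [|b] h.
    by exists 0%N; apply: Or44; rewrite !expg0; split=> //; lia.
  by exists b; apply: Or43; rewrite expgSr -mulgA rt; split=> //; lia.
- by exists a.+1; apply: Or42; rewrite mulgA (tC (r ^+ a)) rAt -mulgA -qE expgSr; split=> //; lia.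
- by exists a; apply: Or41; rewrite mulgA (tC (q ^+ a)) qAt -mulgA tt1 mulg1; split=> //; lia.
Qed.

Lemma fam_word (ws : seq gT) : all (fun x => x \in [set s; t]) ws ->
  fam (size ws) (\prod_(x <- ws) x).
Proof.
elim: ws => [|x ws IH] /=.
  by move=> _; rewrite big_nil; exists 0%N; apply: Or41; rewrite expg0.
by case/andP => hx hws; rewrite big_cons; apply: fam_step => //; apply: IH.
Qed.

Lemma rk_notin_fam n : (n < 2 * k)%N -> ~ fam n (r ^+ k).
Proof.
move=> hn [a [[e h]|[e h]|[e h]|[e h]]].
- have : (r ^+ a == r ^+ k) by rewrite e.
  rewrite eq_expg_mod_order ort !modn_small; [|lia|lia].
  by move/eqP; lia.
- have : (r ^+ (a + k) == r ^+ 0) by rewrite expgD e expgVn mulgV expg0.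
  rewrite eq_expg_mod_order ort mod0n modn_small; last by lia.
  by move/eqP; lia.
- have hs : (r ^+ a)^-1 * (r ^+ a * s) \in <[r]> by rewrite -e groupM ?groupV ?mem_cycle.
  by rewrite mulKg in hs; have := s_notin; rewrite hs.
- have hs : (q ^+ a.+1)^-1 * (q ^+ a.+1 * s) \in <[r]>.
    have eqq : q ^+ a.+1 * s = q ^+ a * t by rewrite expgSr -mulgA -tq.
    by rewrite eqq -e groupM ?groupV ?groupX ?groupV ?mem_cycle ?cycle_id.
  by rewrite mulKg in hs; have := s_notin; rewrite hs.
Qed.

Definition alt (x y : gT) (a : nat) := flatten (nseq a [:: x; y]).
Lemma alt_size x y a : size (alt x y a) = (2 * a)%N.
Proof. by elim: a => //= a IH; rewrite /alt /= in IH *; rewrite IH; lia. Qed.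
Lemma alt_prod x y a : \prod_(z <- alt x y a) z = (x * y) ^+ a.
Proof.
elim: a => [|a IH]; first by rewrite /alt big_nil expg0.
by rewrite /alt /= !big_cons -/(alt x y a) IH expgS mulgA.
Qed.
Lemma alt_all x y a : x \in [set s; t] -> y \in [set s; t] ->
  all (fun z => z \in [set s; t]) (alt x y a).
Proof. by move=> hx hy; elim: a => //= a IH; rewrite hx hy. Qed.

Lemma cardW_le : (4 * k <= #|gT|)%N.
Proof. by rewrite -[(4 * k)%N]/(2 * 2 * k)%N mulnAC -mulnA mulnA -cardW max_card. Qed.

Lemma cox_rk : (2 * k <= cox_len [set s; t] (r ^+ k))%N.
Proof.
apply: cox_len_ge; first by have := cardW_le; lia.
move=> n /word_of_lenP [ws [hs hall hp]].
rewrite leqNgt; apply/negP => hn.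
have := fam_word ws hall; rewrite hs hp; exact: rk_notin_fam hn.
Qed.

Lemma word_short g ws : all (fun z => z \in [set s; t]) ws -> \prod_(z <- ws) z = g ->
  (size ws < 2 * k)%N -> (cox_len [set s; t] g < 2 * k)%N.
Proof.
move=> ha hp hs; have hc := cardW_le; apply: (leq_ltn_trans _ hs); apply: cox_len_le.
  by lia.
by apply/word_of_lenP; exists ws.
Qed.

Lemma s_in : s \in [set s; t]. Proof. by rewrite set21. Qed.
Lemma t_in : t \in [set s; t]. Proof. by rewrite set22. Qed.

Lemma qbt b : q ^+ b * t = q ^+ b.+1 * s.
Proof. by rewrite expgSr -mulgA -tq. Qed.

Lemma cox_other g : g \in W -> g != r ^+ k -> (cox_len [set s; t] g < 2 * k)%N.
Proof.
move=> /W_elem [a ha [-> | ->]] ne.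
- case: (ltngtP a k) => hak.
  + apply: (@word_short _ (alt s t a)); rewrite ?alt_all ?s_in ?t_in ?alt_prod ?alt_size //; lia.
  + have e : r ^+ a = q ^+ (2 * k - a).
      apply/eqP; rewrite expgVn eq_sym eq_invg_mul -expgD.
      by rewrite subnK ?r2k //; lia.
    apply: (@word_short _ (alt t s (2 * k - a))); rewrite ?alt_all ?s_in ?t_in ?alt_prod ?alt_size ?e ?qE //; lia.
  + by move: ne; rewrite hak eqxx.
- case: (ltnP a k) => hak.
  + apply: (@word_short _ (rcons (alt s t a) s)).
    * by rewrite -cats1 all_cat alt_all ?s_in ?t_in //= s_in.
    * by rewrite -cats1 big_cat big_seq1 /= alt_prod.
    * by rewrite size_rcons alt_size; lia.
  + have e : r ^+ a * s = q ^+ (2 * k - a).-1 * t.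
      rewrite qbt prednK; last by lia.
      congr (_ * _); apply/eqP; rewrite expgVn eq_sym eq_invg_mul -expgD.
      by rewrite subnK ?r2k //; lia.
    apply: (@word_short _ (rcons (alt t s (2 * k - a).-1) t)).
    * by rewrite -cats1 all_cat alt_all ?s_in ?t_in //= t_in.
    * by rewrite -cats1 big_cat big_seq1 /= alt_prod e qE.
    * by rewrite size_rcons alt_size; lia.
Qed.

Lemma longest_rk w0 : is_longest [set s; t] w0 -> w0 = r ^+ k.
Proof.
case/andP => hw /forall_inP hall.
apply/eqP; apply: contraT => ne.
have h1 := cox_other _ hw ne.
have h2 := hall (r ^+ k) (groupX k rW).
have := cox_rk; lia.
Qed.

Lemma Wnorm : W \subset 'N(<[r]>).
Proof. by rewrite WE mul_subG ?normG ?snorm. Qed.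
Lemma conj_notin x y : x \notin <[r]> -> y \in W -> x ^ y \notin <[r]>.
Proof. by move=> hx hy; rewrite memJ_norm // (subsetP Wnorm). Qed.
Lemma ref_notin a : r ^+ a * s \notin <[r]>.
Proof.
apply/negP => h; have := s_notin; rewrite -[X in X \in _](mulKg (r ^+ a)).
by rewrite groupM ?groupV ?mem_cycle.
Qed.
Lemma rot_comm a b : commute (r ^+ a) (r ^+ b).
Proof. exact: commuteX2. Qed.
Lemma rotconj a b : (r ^+ b) ^ (r ^+ a) = r ^+ b.
Proof. by rewrite /conjg (rot_comm b a) mulKg. Qed.
Lemma zs : (r ^+ k) ^ s = r ^+ k.
Proof.
rewrite rAs; apply/eqP; rewrite expgVn eq_invg_mul -expgD addnn -mul2n.
by rewrite r2k.
Qed.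
Lemma zc y : y \in W -> (r ^+ k) ^ y = r ^+ k.
Proof.
move=> /W_elem [b _ e].
have h : (r ^+ k) ^ (r ^+ b) = r ^+ k by rewrite /conjg (rot_comm k b) mulKg.
by case: e => ->; rewrite ?conjgM h ?zs.
Qed.
Lemma zsub : <[r ^+ k]> \subset W.
Proof. by rewrite cycle_subG groupX ?rW. Qed.
Lemma ord_z : #[r ^+ k] = 2%N.
Proof. by rewrite orderXdiv ort ?dvdn_mull // mulnK. Qed.
Lemma in_z a : (r ^+ a \in <[r ^+ k]>) = (2 * k %| 2 * a)%N.
Proof.
apply/idP/idP => [h | ].
  by have := order_dvdG h; rewrite -orderE ord_z order_dvdn -expgM -order_dvdn ort (mulnC a).
rewrite dvdn_pmul2l // => /dvdnP [c ->].
by rewrite mulnC expgM mem_cycle.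
Qed.

Lemma cent_rj j : (0 < j < k)%N -> 'C_W[r ^+ j] = <[r]>.
Proof.
move=> hj; apply/eqP; rewrite eqEsubset; apply/andP; split; last first.
  rewrite subsetI !cycle_subG rW /=; rewrite cent1E; apply/eqP.
  by have := rot_comm 1 j; rewrite expg1.
apply/subsetP => x /setIP [hx]; rewrite cent1E => /eqP cx.
case: (W_elem _ hx) => a _ [-> | ex]; first by rewrite mem_cycle.
have : (r ^+ j) ^ x = r ^+ j by rewrite /conjg -cx mulKg.
rewrite ex conjgM rotconj rAs => e.
have : (r ^+ (j + j) == 1).
  by rewrite expgD -{1}e expgVn mulVg.
rewrite -order_dvdn ort addnn -mul2n dvdn_pmul2l // => /dvdn_leq.
by lia.
Qed.

Lemma cent_rk : 'C_W[r ^+ k] = W.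
Proof.
apply/setIidPl/subsetP => y hy; rewrite cent1E; apply/eqP.
by rewrite [RHS]conjgC zc.
Qed.

Lemma s_ne1 : s != 1.
Proof. by apply/eqP => e; move: os; rewrite e order1. Qed.
Lemma eps_r (eps : 'CF(W)) a : eps \is a linear_char -> eps s = (-1)%R -> eps t = (-1)%R ->
  eps (r ^+ a) = 1%R.
Proof.
move=> el es et; rewrite (lin_charX el) ?rW // (lin_charM el) ?sW ?tW // es et.
by rewrite GRing.mulrNN GRing.mulr1 GRing.expr1n.
Qed.

Local Open Scope ring_scope.

Lemma IndR (phi : 'CF(<[r]>)) x : ('Ind[W] phi) x = phi x + phi (x ^ s)%g.
Proof.
rewrite (cfIndEsdprod _ _ sdpW) (_ : gval <[s]>%G = [set 1%g; s]); last exact: cycle2g os.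
rewrite big_setU1 ?big_set1 ?conjg1 //=.
by rewrite inE eq_sym s_ne1.
Qed.

Lemma Ind1_val x : x \in W ->
  ('Ind[W] (1 : 'CF(<[r ^+ k]>))) x = (x \in <[r ^+ k]>)%:R *+ (2 * k).
Proof.
move=> hx; rewrite cfIndE ?zsub // (eq_bigr (fun _ => (x \in <[r ^+ k]>)%:R)); last first.
  move=> y hy; rewrite cfun1E memJ_norm //; apply/normP; rewrite -cycleJ zc //.
rewrite sumr_const cardW -orderE ord_z mulrnA -(mulr_natr (_ *+ (2 * k)) 2) mulrC mulfK //.
by rewrite pnatr_eq0.
Qed.

Lemma main_sec (zeta : algC) (eps : 'CF(<<[set s; t]>>)) (chi : nat -> 'CF(<[(s * t)%g]>)) (w0 : gT) :
  (2 * k)%N.-primitive_root zeta ->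
  eps \is a linear_char -> eps s = -1 -> eps t = -1 ->
  (forall j : nat, chi j \is a linear_char /\ chi j (s * t)%g = zeta ^+ j) ->
  is_longest [set s; t] w0 ->
  [/\ (forall j : nat, (0 < j < k)%N ->
          ('C_(<<[set s; t]>>)[(s * t) ^+ j] = <[s * t]>)%g),
      ('C_(<<[set s; t]>>)[(s * t) ^+ k] = <<[set s; t]>>)%g,
      (forall j : nat, (0 < j <= k)%N -> phi_st k eps chi j \is a linear_char),
      \sum_(1 <= j < k.+1) 'Ind[<<[set s; t]>>] (phi_st k eps chi j)
        = eps + \sum_(1 <= j < k) 'Ind[<<[set s; t]>>] (chi (2 * j)%N)
    & eps + \sum_(1 <= j < k) 'Ind[<<[set s; t]>>] (chi (2 * j)%N)
        = Phi_S [set s; t] w0].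
Proof.
move=> pz el es et hchi hl; split.
- exact: cent_rj.
- exact: cent_rk.
- move=> j hj; rewrite /phi_st; case: ifP => _; apply: cfRes_lin_char; [exact: (hchi _).1 | exact: el].
- rewrite big_nat_recr //= addrC; congr (_ + _).
    rewrite /phi_st ltnn (@cfInd_sameset _ W _ W _ eps cent_rk) ?cfInd_id ?subsetIl //.
    by move=> x; apply: cfRes_sameset cent_rk.
  apply: eq_big_nat => j hj; rewrite /phi_st ifT; last by case/andP: hj.
  have hc : 'C_W[r ^+ j]%g = <[r]>%g by apply: cent_rj; lia.
  rewrite (@cfInd_sameset _ W _ <[r]>%G _ (chi (2 * j)%N) hc) ?subsetIl //.
  by move=> x; apply: cfRes_sameset hc.
- rewrite (longest_rk _ hl) /Phi_S.
  apply/cfunP => x; rewrite !cfunE sum_cfunE.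
  case: (boolP (x \in W)) => hx; last first.
    rewrite big1 => [|j _]; last by rewrite cfun0.
    by rewrite !cfun0 // addr0 subr0.
  case: (W_elem _ hx) => a ha [-> | ->].
  + set u := zeta ^+ (2 * a).
    rewrite Ind1_val; last by rewrite groupX ?rW.
    rewrite (cfun1E W%G) (groupX a rW) (in_z a) eps_r //.
    rewrite (eq_bigr (fun j => u ^+ j + (u^-1) ^+ j)); last first.
      move=> j _; rewrite IndR rAs expgVn.
      have [cl cr] := hchi (2 * j)%N.
      rewrite (lin_charV cl) ?mem_cycle // (lin_charX cl) ?cycle_id // cr.
      by rewrite exprVn /u -!exprM mulnAC.
    have uk : u ^+ k = 1.
      by rewrite /u -exprM mulnAC exprM (prim_expr_order pz) expr1n.
    have uk' : (u^-1) ^+ k = 1 by rewrite exprVn uk invr1.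
    rewrite big_split /= !geom1 // invr_eq1 /u -(prim_order_dvd pz).
    case: (2 * k %| 2 * a)%N => /=; rewrite ?mul0rn ?natrM; ring.
  + rewrite big1 => [|j _]; last first.
      by rewrite IndR !cfun0 ?addr0 // ?conj_notin ?ref_notin ?sW.
    have hz : (r ^+ a * s)%g \notin <[(r ^+ k)%g]>.
      by apply: contra (ref_notin a); apply/subsetP; rewrite cycle_subG mem_cycle.
    rewrite Ind1_val; last by rewrite groupM ?groupX ?rW ?sW.
    rewrite (negbTE hz) mul0rn (cfun1E W%G).
    rewrite groupM ?groupX ?rW ?sW // (lin_charM el) ?groupX ?rW ?sW // eps_r // es.
    by rewrite addr0 mul1r sub0r.
Qed.
End Dih.

Local Open Scope ring_scope.

Theorem proposition5p6 (gT : finGroupType) (s t : gT) (k : nat) (zeta : algC)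
  (eps : 'CF(<<[set s; t]>>)) (chi : nat -> 'CF(<[(s * t)%g]>)) (w0 : gT) :
  (0 < k)%N ->
  #[s]%g = 2%N -> #[t]%g = 2%N -> #[(s * t)%g]%g = (2 * k)%N ->
  (2 * k)%N.-primitive_root zeta ->
  eps \is a linear_char -> eps s = -1 -> eps t = -1 ->
  (forall j : nat, chi j \is a linear_char /\ chi j (s * t)%g = zeta ^+ j) ->
  is_longest [set s; t] w0 ->
  [/\ (forall j : nat, (0 < j < k)%N ->
          ('C_(<<[set s; t]>>)[(s * t) ^+ j] = <[s * t]>)%g),
      ('C_(<<[set s; t]>>)[(s * t) ^+ k] = <<[set s; t]>>)%g,
      (forall j : nat, (0 < j <= k)%N -> phi_st k eps chi j \is a linear_char),
      \sum_(1 <= j < k.+1) 'Ind[<<[set s; t]>>] (phi_st k eps chi j)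
        = eps + \sum_(1 <= j < k) 'Ind[<<[set s; t]>>] (chi (2 * j)%N)
    & eps + \sum_(1 <= j < k) 'Ind[<<[set s; t]>>] (chi (2 * j)%N)
        = Phi_S [set s; t] w0].
Proof.
move=> k0 os ot ort pz el es et hchi hl.
exact: (@main_sec gT s t k k0 os ot ort zeta eps chi w0 pz el es et hchi hl).
Qed.
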